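(* Under the hypotheses and notation of the mass scaling of Olovsson et al. (element matrices $\overline{M}_e=I_3\otimes\bigl(\frac{m_e}{8}I_8+\frac{\beta m_e}{56}(8I_8-\mathbf{e}\mathbf{e}^T)\bigr)$, $\beta\ge0$, $m_e>0$, assembled as $\overline{M}=\sum_eL_e^T\overline{M}_eL_e$), one has $$\kappa(\overline{M})\le p_{\max}\Bigl(1+\tfrac{8}{7}\beta\Bigr)\frac{\max_e m_e}{\min_e m_e},$$ where $p_{\max}$ is the maximum, over global degrees of freedom $i$, of the number of elements $e$ whose index set $\{i_1,\dots,i_m\}$ contains $i$.
   Context: Finite element setting: $n$ global degrees of freedom, $N$ elements, $m=24$ local degrees of freedom per element; for each element $e$, $L_e\in\mathbb{R}^{m\times n}$ satisfies $L_e^T=[\mathbf{e}_{i_1},\dots,\mathbf{e}_{i_m}]$ for distinct indices (columns of $I_n$), and every global index appears for at least one element. $\mathbf{e}\in\mathbb{R}^8$ is the all-ones vector, $\otimes$ the Kronecker product, and $\kappa(A)=\lambda_{\max}(A)/\lambda_{\min}(A)$ for symmetric positive definite $A$. *)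

(* Defs.v *)
From HB Require Import structures.
From mathcomp Require Import all_boot all_order all_algebra.
From mathcomp Require Import classical_sets reals.
From mathcomp Require Import mxtens.
Set Implicit Arguments. Unset Strict Implicit. Unset Printing Implicit Defensive.
Import Order.TTheory GRing.Theory Num.Theory.
Local Open Scope ring_scope.

Notation mloc := 24%N.

(* Boolean (0/1) localization matrix L_e : rows are e_{i_1}^T, ..., e_{i_m}^T,
   where dofs k = i_{k+1}. *)
Definition locmx (R : pzRingType) (n : nat) (dofs : 'I_mloc -> 'I_n) : 'M[R]_(mloc, n) :=
  \matrix_(k, j) ((dofs k == j)%:R).

Definition ones8 (R : pzRingType) : 'cV[R]_8 := const_mx 1.

Definition elem_mass (R : fieldType) (beta me : R) : 'M[R]_(3 * 8) :=
  (1%:M : 'M[R]_3) *t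
    ((me / 8) *: (1%:M : 'M[R]_8)
     + (beta * me / 56) *: (8%:R *: (1%:M : 'M[R]_8) - ones8 R *m (ones8 R)^T)).

Definition assembled (R : fieldType) (n N : nat) (dofs : 'I_N -> 'I_mloc -> 'I_n)
  (beta : R) (me : 'I_N -> R) : 'M[R]_n :=
  \sum_(e < N) ((locmx R (dofs e))^T *m (elem_mass beta (me e) : 'M[R]_mloc) *m locmx R (dofs e)).

Definition spd (R : realFieldType) (n : nat) (A : 'M[R]_n) : Prop :=
  A^T = A /\ forall x : 'cV[R]_n, x != 0 -> 0 < (x^T *m A *m x) 0 0.

Definition lambda_max (R : realType) (n : nat) (A : 'M[R]_n) : R :=
  sup [set a : R | eigenvalue A a].
Definition lambda_min (R : realType) (n : nat) (A : 'M[R]_n) : R :=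
  inf [set a : R | eigenvalue A a].
Definition kappa (R : realType) (n : nat) (A : 'M[R]_n) : R :=
  lambda_max A / lambda_min A.

Definition p_max (n N : nat) (dofs : 'I_N -> 'I_mloc -> 'I_n) : nat :=
  \max_(i < n) #|[set e : 'I_N | [exists k, dofs e k == i]]|.

(* Main.v *)
Require Import Defs.
From HB Require Import structures.
From mathcomp Require Import all_boot all_order all_algebra.
From mathcomp Require Import classical_sets boolp reals.
From mathcomp Require Import mxtens.
From mathcomp Require Import ring lra.
Import Order.TTheory GRing.Theory Num.Theory.
Local Open Scope ring_scope.

Section Helpers.
Variable R : realType.

Definition qf {k} (A : 'M[R]_k) (x : 'cV[R]_k) : R := (x^T *m A *m x) 0 0.

Lemma qfD k (A B : 'M[R]_k) x : qf (A + B) x = qf A x + qf B x.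
Proof. by rewrite /qf mulmxDr mulmxDl mxE. Qed.

Lemma qfZ k c (A : 'M[R]_k) x : qf (c *: A) x = c * qf A x.
Proof. by rewrite /qf -scalemxAr -scalemxAl mxE. Qed.

Lemma qfB k (A B : 'M[R]_k) x : qf (A - B) x = qf A x - qf B x.
Proof. by rewrite -scaleN1r qfD qfZ mulN1r. Qed.

Lemma qf1 k (x : 'cV[R]_k) : qf 1%:M x = \sum_i x i 0 ^+ 2.
Proof. rewrite /qf mulmx1 mxE; apply: eq_bigr => i _; by rewrite !mxE expr2. Qed.

Lemma qf_psd k p (P : 'M[R]_(p, k)) x : 0 <= qf (P^T *m P) x.
Proof.
rewrite /qf !mulmxA -mulmxA -trmx_mul mxE.
by apply: sumr_ge0 => i _; rewrite mxE -expr2 sqr_ge0.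
Qed.

Lemma tensmxDr m n p q (A : 'M[R]_(m,n)) (B C : 'M[R]_(p,q)) :
  A *t (B + C) = A *t B + A *t C.
Proof. by apply/matrixP => i j; rewrite !mxE mulrDr. Qed.

Lemma tensmxBr m n p q (A : 'M[R]_(m,n)) (B C : 'M[R]_(p,q)) :
  A *t (B - C) = A *t B - A *t C.
Proof. by apply/matrixP => i j; rewrite !mxE mulrBr. Qed.

Lemma tensmxZr m n p q c (A : 'M[R]_(m,n)) (B : 'M[R]_(p,q)) :
  A *t (c *: B) = c *: (A *t B).
Proof. by apply/matrixP => i j; rewrite !mxE mulrCA. Qed.

Lemma tens11 m p : (1%:M : 'M[R]_m) *t (1%:M : 'M[R]_p) = 1%:M.
Proof.
apply/matrixP => i j.
case: (mxtens_indexP i) => i0 i1; case: (mxtens_indexP j) => j0 j1.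
rewrite tensmxE !mxE (inj_eq (can_inj (@mxtens_indexK _ _))) xpair_eqE.
by case: (i0 == j0); case: (i1 == j1); rewrite ?mulr1 ?mulr0.
Qed.

Definition J8 : 'M[R]_8 := ones8 R *m (ones8 R)^T.

Lemma J8E : J8 = const_mx 1.
Proof.
by apply/matrixP => i j; rewrite !mxE big_ord1 !mxE mulr1.
Qed.

Lemma J8J8 : J8 *m J8 = 8%:R *: J8.
Proof.
rewrite J8E; apply/matrixP => i j; rewrite !mxE.
rewrite (eq_bigr (fun _ => 1)) ?sumr_const ?card_ord ?mulr1 //.
by move=> k _; rewrite !mxE mulr1.
Qed.

Lemma J8T : J8^T = J8.
Proof. by rewrite /J8 trmx_mul trmxK. Qed.

Definition G8 : 'M[R]_8 := 8%:R *: 1%:M - J8.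

Lemma G8T : G8^T = G8.
Proof. by rewrite /G8 linearB /= linearZ /= trmx1 J8T. Qed.

Lemma G8G8 : G8 *m G8 = 8%:R *: G8.
Proof.
rewrite /G8 mulmxBr !mulmxBl -!scalemxAl -!scalemxAr !mul1mx !mulmx1 J8J8.
by rewrite scalerBr subrr subr0.
Qed.


Lemma elem_massE beta m : elem_mass beta m =
  (m / 8) *: 1%:M + (beta * m / 56) *: ((1%:M : 'M[R]_3) *t G8).
Proof. by rewrite /elem_mass tensmxDr !tensmxZr tens11. Qed.

Lemma GG_psd (y : 'cV[R]_(3 * 8)) : 0 <= qf ((1%:M : 'M[R]_3) *t G8) y.
Proof.
have -> : (1%:M : 'M[R]_3) *t G8 =
   8%:R^-1 *: (((1%:M : 'M[R]_3) *t G8)^T *m ((1%:M : 'M[R]_3) *t G8)).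
  rewrite trmx_tens trmx1 G8T tensmx_mul mulmx1 G8G8 tensmxZr scalerA mulVf ?scale1r //.
  by rewrite pnatr_eq0.
by rewrite qfZ mulr_ge0 ?invr_ge0 ?ler0n ?qf_psd.
Qed.

Lemma GG_le (y : 'cV[R]_(3 * 8)) :
  qf ((1%:M : 'M[R]_3) *t G8) y <= 8%:R * qf 1%:M y.
Proof.
have -> : (1%:M : 'M[R]_3) *t G8 = 8%:R *: 1%:M - (1%:M : 'M[R]_3) *t J8.
  by rewrite /G8 tensmxBr tensmxZr tens11.
have -> : (1%:M : 'M[R]_3) *t J8 =
   8%:R^-1 *: (((1%:M : 'M[R]_3) *t J8)^T *m ((1%:M : 'M[R]_3) *t J8)).
  rewrite trmx_tens trmx1 J8T tensmx_mul mulmx1 J8J8 tensmxZr scalerA mulVf ?scale1r //.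
  by rewrite pnatr_eq0.
rewrite qfB qfZ qfZ gerBl mulr_ge0 ?invr_ge0 ?ler0n ?qf_psd //.
Qed.

Lemma elem_bounds beta m (y : 'cV[R]_(3 * 8)) : 0 <= beta -> 0 < m ->
  m / 8 * qf 1%:M y <= qf (elem_mass beta m) y <=
  m / 8 * (1 + 8 / 7 * beta) * qf 1%:M y.
Proof.
move=> hb hm; rewrite elem_massE qfD !qfZ.
have g0 := GG_psd y; have g8 := GG_le y.
have c0 : 0 <= beta * m / 56 by rewrite mulr_ge0 ?mulr_ge0 ?invr_ge0 ?ler0n // ltW.
apply/andP; split.
  by rewrite lerDl mulr_ge0.
have := ler_wpM2l c0 g8.
set g := qf _ y; set s := qf 1%:M y => h.
have -> : m / 8 * (1 + 8 / 7 * beta) * s = m / 8 * s + beta * m / 56 * (8%:R * s).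
  by field.
by rewrite lerD2l.
Qed.


Lemma locmxE n (d : 'I_mloc -> 'I_n) (x : 'cV[R]_n) k :
  (locmx R d *m x) k 0 = x (d k) 0.
Proof.
rewrite mxE (bigD1 (d k)) //= big1 ?addr0; first by rewrite mxE eqxx mul1r.
by move=> j /negPf hj; rewrite mxE eq_sym hj mul0r.
Qed.

Lemma qf_assembled n N (dofs : 'I_N -> 'I_mloc -> 'I_n) beta me x :
  qf (assembled dofs beta me) x =
  \sum_e qf (elem_mass beta (me e) : 'M[R]_mloc) (locmx R (dofs e) *m x).
Proof.
rewrite /qf /assembled mulmx_sumr mulmx_suml summxE; apply: eq_bigr => e _.
by rewrite trmx_mul !mulmxA.
Qed.

Lemma qf1_loc n (d : 'I_mloc -> 'I_n) (x : 'cV[R]_n) :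
  qf 1%:M (locmx R d *m x) = \sum_k x (d k) 0 ^+ 2.
Proof. by rewrite qf1; apply: eq_bigr => k _; rewrite locmxE. Qed.

Lemma count_sum n N (dofs : 'I_N -> 'I_mloc -> 'I_n) (f : 'I_n -> R) :
  (forall e, injective (dofs e)) ->
  \sum_e \sum_k f (dofs e k) =
  \sum_i #|[set e : 'I_N | [exists k, dofs e k == i]]|%:R * f i.
Proof.
move=> Hinj.
have step : forall e, \sum_k f (dofs e k) =
    \sum_i ([exists k, dofs e k == i])%:R * f i.
  move=> e.
  transitivity (\sum_k \sum_i ((dofs e k == i)%:R * f i)).
    apply: eq_bigr => k _; rewrite (bigD1 (dofs e k)) //= eqxx mul1r big1 ?addr0 //.
    by move=> j /negPf hj; rewrite eq_sym hj mul0r.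
  rewrite exchange_big; apply: eq_bigr => i _; rewrite -mulr_suml; congr (_ * _).
  case: existsP => [[k /eqP hk]|hn].
    rewrite (bigD1 k) //= hk eqxx big1 ?addr0 //.
    move=> k' hk'; case: eqP => // h; exfalso; move: hk'.
    by rewrite -hk in h; rewrite (Hinj e _ _ h) eqxx.
  by rewrite big1 // => k _; case: eqP => // h; exfalso; apply: hn; exists k; rewrite h.
rewrite (eq_bigr _ (fun e _ => step e)) exchange_big; apply: eq_bigr => i _.
rewrite -mulr_suml; congr (_ * _).
rewrite -sum1_card natr_sum [RHS]big_mkcond /=; apply: eq_bigr => e _.
by rewrite inE; case: ifP.
Qed.




Lemma range_bounds N (me : 'I_N -> R) (e0 : 'I_N) : (forall e, 0 < me e) ->
  0 < inf (range me) /\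
  (forall e, inf (range me) <= me e /\ me e <= sup (range me)).
Proof.
move=> Hme.
have [emax _ Hmax] := @arg_maxP _ _ _ e0 xpredT me isT.
have [emin _ Hmin] := @arg_minP _ _ _ e0 xpredT me isT.
have hub : has_ubound (range me).
  by exists (me emax) => y [e _ <-]; apply: Hmax.
have hlb : has_lbound (range me).
  by exists (me emin) => y [e _ <-]; apply: Hmin.
split.
  apply: (lt_le_trans (Hme emin)); apply: lb_le_inf; first by exists (me e0), e0.
  by move=> y [e _ <-]; apply: Hmin.
move=> e; split.
  by apply: (ge_inf hlb); exists e.
by apply: (ub_le_sup hub); exists e.
Qed.

Lemma qf1_ge0 k (x : 'cV[R]_k) : 0 <= qf 1%:M x.
Proof. by rewrite qf1 sumr_ge0 // => i _; rewrite sqr_ge0. Qed.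

Lemma quad_bounds n N (dofs : 'I_N -> 'I_mloc -> 'I_n) beta (me : 'I_N -> R)
  (m0 M0 : R) (pm : nat) :
  (forall e, injective (dofs e)) ->
  (forall i : 'I_n, 1 <= #|[set e : 'I_N | [exists k, dofs e k == i]]|)%N ->
  (forall i : 'I_n, #|[set e : 'I_N | [exists k, dofs e k == i]]| <= pm)%N ->
  0 <= beta -> (forall e, 0 < me e) -> 0 <= m0 ->
  0 <= M0 -> (forall e, m0 <= me e /\ me e <= M0) ->
  forall x : 'cV[R]_n,
  m0 / 8 * qf 1%:M x <= qf (assembled dofs beta me) x <=
  M0 / 8 * (1 + 8 / 7 * beta) * pm%:R * qf 1%:M x.
Proof.
move=> Hinj p1 pm1 hb Hme m00 M00 hmM x.
have K0 : 0 <= 1 + 8 / 7 * beta by rewrite addr_ge0 ?ler01 // mulr_ge0 // divr_ge0 ?ler0n.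
have se0 : forall e, 0 <= qf 1%:M (locmx R (dofs e) *m x) by move=> e; apply: qf1_ge0.
have cnt : \sum_e qf 1%:M (locmx R (dofs e) *m x) =
    \sum_i #|[set e : 'I_N | [exists k, dofs e k == i]]|%:R * x i 0 ^+ 2.
  transitivity (\sum_e \sum_k x (dofs e k) 0 ^+ 2).
    by apply: eq_bigr => e _; rewrite qf1_loc.
  exact: (@count_sum n N dofs (fun i => x i 0 ^+ 2) Hinj).
rewrite qf_assembled; apply/andP; split.
  apply: (@le_trans _ _ (\sum_e m0 / 8 * qf 1%:M (locmx R (dofs e) *m x))).
    rewrite -mulr_sumr cnt qf1; apply: ler_wpM2l; first by rewrite divr_ge0 ?ler0n.
    apply: ler_sum => i _; apply: ler_peMl; first by rewrite sqr_ge0.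
    by rewrite ler1n.
  apply: ler_sum => e _.
  have [h1 _] := andP (elem_bounds beta (me e) (locmx R (dofs e) *m x) hb (Hme e)).
  apply: le_trans h1; apply: ler_wpM2r => //.
  by apply: ler_wpM2r; [rewrite invr_ge0 ler0n | case: (hmM e)].
apply: (@le_trans _ _ (\sum_e M0 / 8 * (1 + 8 / 7 * beta) * qf 1%:M (locmx R (dofs e) *m x))).
  apply: ler_sum => e _.
  have [_ h2] := andP (elem_bounds beta (me e) (locmx R (dofs e) *m x) hb (Hme e)).
  apply: (le_trans h2); apply: ler_wpM2r => //; apply: ler_wpM2r => //.
  by apply: ler_wpM2r; [rewrite invr_ge0 ler0n | case: (hmM e)].
rewrite -mulr_sumr cnt qf1 -[X in _ <= X]mulrA; apply: ler_wpM2l.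
  by rewrite mulr_ge0 // divr_ge0 ?ler0n.
rewrite mulr_sumr; apply: ler_sum => i _; apply: ler_wpM2r; first by rewrite sqr_ge0.
by rewrite ler_nat.
Qed.


Lemma elem_massT (beta m : R) : (elem_mass beta m)^T = elem_mass beta m.
Proof.
by rewrite elem_massE linearD /= !linearZ /= trmx1 trmx_tens trmx1 G8T.
Qed.

End Helpers.
Arguments qf {R k}.
Arguments qf1 {R k}.
Arguments range_bounds {R N me}.
Arguments quad_bounds {R n N dofs beta me m0 M0 pm}.
Arguments elem_massT {R}.

Local Open Scope classical_set_scope.

Theorem mainTheorem9 (R : realType) (n N : nat)
  (dofs : 'I_N -> 'I_mloc -> 'I_n)
  (beta : R) (me : 'I_N -> R)
  (Hinj : forall e : 'I_N, injective (dofs e))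
  (Hcover : forall i : 'I_n, exists e : 'I_N, exists k : 'I_mloc, dofs e k = i)
  (Hbeta : 0 <= beta)
  (Hme : forall e : 'I_N, 0 < me e) :
  spd (assembled dofs beta me) /\
  kappa (assembled dofs beta me)
    <= (p_max dofs)%:R * (1 + 8 / 7 * beta) * (sup (range me) / inf (range me)).
Proof.
set A := assembled dofs beta me.
have p1 : forall i : 'I_n,
    (1 <= #|[set e : 'I_N | [exists k, dofs e k == i]]%SET|)%N.
  move=> i; rewrite card_gt0; apply/set0Pn; have [e [k hk]] := Hcover i.
  by exists e; rewrite inE; apply/existsP; exists k; rewrite hk.
have pm1 : forall i : 'I_n,
    (#|[set e : 'I_N | [exists k, dofs e k == i]]%SET| <= p_max dofs)%N.
  by move=> i; rewrite /p_max; exact: (@leq_bigmax _ (fun i => #|[set e : 'I_N | [exists k, dofs e k == i]]%SET|) i).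
have K0 : 0 <= 1 + 8 / 7 * beta.
  by rewrite addr_ge0 ?ler01 // mulr_ge0 // divr_ge0 ?ler0n.
have bnd : forall e0 : 'I_N, 0 < inf (range me) /\ 0 < sup (range me) /\
   forall x : 'cV[R]_n,
   inf (range me) / 8 * qf 1%:M x <= qf A x <=
   sup (range me) / 8 * (1 + 8 / 7 * beta) * (p_max dofs)%:R * qf 1%:M x.
  move=> e0; have [m0p hmM] := range_bounds e0 Hme.
  have M0p : 0 < sup (range me) by apply: (lt_le_trans (Hme e0)); case: (hmM e0).
  split => //; split => // x.
  by apply: quad_bounds => //; apply: ltW.
have qpos : forall x : 'cV[R]_n, x != 0 ->
    0 < qf 1%:M x /\ exists e0 : 'I_N, True.
  move=> x /matrix0Pn [i [j hj]]; rewrite (ord1 j) in hj.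
  split; last by have [e _] := Hcover i; exists e.
  rewrite qf1 (bigD1 i) //=.
  have h1 : 0 < x i 0 ^+ 2 by rewrite lt_neqAle sqr_ge0 andbT eq_sym sqrf_eq0.
  have h2 : 0 <= \sum_(i0 | i0 != i) x i0 0 ^+ 2.
    by apply: sumr_ge0 => k _; rewrite sqr_ge0.
  by apply: (lt_le_trans h1); rewrite lerDl.
split.
  split.
    rewrite /A /assembled linear_sum; apply: eq_bigr => e _.
    by rewrite /= !trmx_mul trmxK elem_massT mulmxA.
  move=> x hx; have [hq [e0 _]] := qpos x hx; have [m0p [_ hb]] := bnd e0.
  apply: lt_le_trans (andP (hb x)).1.
  by rewrite mulr_gt0 // divr_gt0 ?ltr0n.
rewrite /kappa /lambda_max /lambda_min.
set E := [set a : R | eigenvalue A a].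
case: (pselect (E !=set0)) => [[a0 Ea0] | hE].
  have eig_qf : forall a (v : 'rV[R]_n), v *m A = a *: v ->
      qf A v^T = a * qf 1%:M v^T.
    by move=> a v hv; rewrite /qf trmxK hv -scalemxAl mulmx1 mxE.
  have vT : forall v : 'rV[R]_n, v != 0 -> v^T != 0 by move=> v; rewrite trmx_eq0.
  have [e0 _] : exists e0 : 'I_N, True.
    move/eigenvalueP: Ea0 => [v _ vn0]; have [_ [e0 _]] := qpos _ (vT _ vn0).
    by exists e0.
  have [m0p [M0p hb]] := bnd e0.
  set m0 := inf (range me) in m0p hb *; set M0 := sup (range me) in M0p hb *.
  set hi := M0 / 8 * (1 + 8 / 7 * beta) * (p_max dofs)%:R.
  have eigb : forall a, E a -> m0 / 8 <= a /\ a <= hi.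
    move=> a /eigenvalueP [v hv vn0]; have [qp _] := qpos _ (vT _ vn0).
    have /andP[h1 h2] := hb v^T; rewrite (eig_qf a v hv) in h1 h2.
    by rewrite ler_pM2r // in h1; rewrite ler_pM2r // in h2.
  have supE : sup E <= hi.
    by apply: ge_sup; [exists a0 | move=> a Ea; case: (eigb a Ea)].
  have infE : m0 / 8 <= inf E.
    by apply: lb_le_inf; [exists a0 | move=> a Ea; case: (eigb a Ea)].
  have lo0 : 0 < m0 / 8 by rewrite divr_gt0 ?ltr0n.
  have inf0 : 0 < inf E by apply: lt_le_trans infE.
  rewrite ler_pdivrMr //; apply: (le_trans supE).
  have -> : hi = (p_max dofs)%:R * (1 + 8 / 7 * beta) * (M0 / m0) * (m0 / 8).
    rewrite /hi; field; by rewrite gt_eqF.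
  apply: ler_wpM2l => //.
  apply: mulr_ge0; first by rewrite mulr_ge0 ?ler0n.
  by rewrite divr_ge0 ?ltW.
have -> : E = set0.
  by apply/seteqP; split => a // Ea; exfalso; apply: hE; exists a.
rewrite sup0 mul0r.
case: (posnP N) => [N0|Npos].
  have -> : range me = set0.
    by apply/seteqP; split => y // [e _ _]; move: (ltn_ord e); rewrite {2}N0.
  by rewrite sup0 mul0r mulr0.
have [m0p [M0p _]] := bnd (Ordinal Npos).
apply: mulr_ge0; first by rewrite mulr_ge0 ?ler0n.
by rewrite divr_ge0 ?ltW.
Qed.
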